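(* Let $X=\{x_1,\dots,x_n\}$ be a finite set of propositional variables and $y\notin X$ a further variable, and let $\mathcal{L}$ be the set of Boolean circuits over $\mathit{PS}=X\cup\{y\}$. Then there exists a rectification operator $\star$ (in the sense defined in the context), and it is unique up to logical equivalence: if $\star$ and $\star'$ are both rectification operators, then $\Sigma\star T\equiv\Sigma\star' T$ for every classification circuit $\Sigma\in\mathcal{L}$ and every $T\in\mathcal{L}$.
   Context: A Boolean circuit over a set of variables $V$ is a directed acyclic graph whose leaves are labelled by variables of $V$ or by the constants $\top$ (=1) and $\bot$ (=0), and whose internal nodes are labelled by $\neg,\wedge,\vee$ or are decision nodes on a variable $v$ (a decision node on $v$ with low child $M$ and high child $P$ stands for $(\neg v\wedge\Phi_M)\vee(v\wedge\Phi_P)$); it is interpreted with the usual semantics of propositional logic. $\equiv$ denotes logical equivalence and $\models$ logical consequence/model satisfaction. Each instance $\vec x\in\{0,1\}^n$ is identified with the canonical term over $X$ containing $x_i$ if the $i$-th coordinate is 1 and $\neg x_i$ otherwise. For a Boolean circuit $\Phi$ and a consistent term $\gamma$, the conditioning $\Phi(\gamma)$ is the circuit obtained by replacing each occurrence of a variable $v$ of $\gamma$ by $\top$ if $v$ is a positive literal of $\gamma$ and by $\bot$ if $\neg v$ is a literal of $\gamma$. A circuit $\Phi\in\mathcal{L}$ classifies $\vec x$ if $\Phi(\vec x)$ has a unique model over $\{y\}$, i.e. $\Phi(\vec x)\equiv y$ (positive instance) or $\Phi(\vec x)\equiv\neg y$ (negative instance); $\Phi$ has the $XY$-classification property (is a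 classification circuit) if it classifies every $\vec x\in\{0,1\}^n$. For $T\in\mathcal{L}$ and $\vec x$, let $F(T,\vec x)=\top$ if $T(\vec x)$ is inconsistent, and otherwise $F(T,\vec x)$ is the conjunction of all literals $\ell\in\{y,\neg y\}$ with $T(\vec x)\models\ell$ (the empty conjunction being $\top$). $\Sigma$ is fact-compliant with $T$ on $\vec x$ if $\Sigma(\vec x)\models F(T,\vec x)$. For $W\subseteq\mathit{PS}$, $\exists W.\Phi$ denotes forgetting ($\exists\emptyset.\Phi\equiv\Phi$, $\exists\{v\}.\Phi\equiv\Phi(\neg v)\vee\Phi(v)$, iterated over the elements of $W$). A rectification operator $\star$ is a mapping associating with every classification circuit $\Sigma\in\mathcal{L}$ and every $T\in\mathcal{L}$ a circuit $\Sigma\star T\in\mathcal{L}$ such that: (RE1) $\Sigma\star T$ is a classification circuit; (RE2) if $\Sigma$ is fact-compliant with $T$ on $\vec x$, then $(\Sigma\star T)(\vec x)\equiv\Sigma(\vec x)$; (RE3) for every $\vec x$, $(\Sigma\star T)(\vec x)\models F(T,\vec x)$; (RE4) if $T$ is inconsistent then $\Sigma\star T\equiv\Sigma$; (RE5) if $\Sigma\equiv\Sigma'$ and $T\equiv T'$ then $\Sigma\star T\equiv\Sigma'\star T'$; (RE6) $\Sigma\star T\equiv(\exists W.\Sigma)\star(\exists W.T)$ where $W=\mathit{PS}\setminus(X\cup\{y\})$ (here $W=\emptyset$). *)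

(* Defs.v *)
From mathcomp Require Import all_boot.
Set Implicit Arguments. Unset Strict Implicit. Unset Printing Implicit Defensive.

(* Propositional variables PS = X ∪ {y}: [Some i] is x_(i+1), [None] is y. *)
Definition var (n : nat) := option 'I_n.
Definition yvar {n : nat} : var n := None.

(* Boolean circuits over PS.  A DAG is represented by its unfolding into a
   tree; sharing does not affect the semantics. *)
Inductive circuit (n : nat) : Type :=
| CVar of var n
| CTop
| CBot
| CNeg of circuit n
| CAnd of circuit n & circuit n
| COr of circuit n & circuit n
| CDec of var n & circuit n & circuit n. (* decision node: var, low child, high child *)

Arguments CTop {n}. Arguments CBot {n}.

Definition assignment (n : nat) := {ffun var n -> bool}.

Fixpoint eval n (a : assignment n) (c : circuit n) : bool :=
  match c with
  | CVar v => a v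
  | CTop => true
  | CBot => false
  | CNeg c1 => ~~ eval a c1
  | CAnd c1 c2 => eval a c1 && eval a c2
  | COr c1 c2 => eval a c1 || eval a c2
  | CDec v lo hi => (~~ a v && eval a lo) || (a v && eval a hi)
  end.

Definition lequiv n (c d : circuit n) : Prop := forall a : assignment n, eval a c = eval a d.
Definition entails n (c d : circuit n) : bool := [forall a : assignment n, eval a c ==> eval a d].
Definition consistent n (c : circuit n) : bool := [exists a : assignment n, eval a c].

Fixpoint cond1 n (v : var n) (b : bool) (c : circuit n) : circuit n :=
  match c with
  | CVar w => if w == v then (if b then CTop else CBot) else CVar w
  | CTop => CTop
  | CBot => CBot
  | CNeg c1 => CNeg (cond1 v b c1)
  | CAnd c1 c2 => CAnd (cond1 v b c1) (cond1 v b c2)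
  | COr c1 c2 => COr (cond1 v b c1) (cond1 v b c2)
  | CDec w lo hi =>
      if w == v then (if b then cond1 v b hi else cond1 v b lo)
      else CDec w (cond1 v b lo) (cond1 v b hi)
  end.

Definition instance (n : nat) := {ffun 'I_n -> bool}.

Fixpoint cond n (x : instance n) (c : circuit n) : circuit n :=
  match c with
  | CVar (Some i) => if x i then CTop else CBot
  | CVar None => CVar None
  | CTop => CTop
  | CBot => CBot
  | CNeg c1 => CNeg (cond x c1)
  | CAnd c1 c2 => CAnd (cond x c1) (cond x c2)
  | COr c1 c2 => COr (cond x c1) (cond x c2)
  | CDec (Some i) lo hi => if x i then cond x hi else cond x lo
  | CDec None lo hi => CDec None (cond x lo) (cond x hi)
  end.

Definition classifies n (c : circuit n) (x : instance n) : Prop :=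
  lequiv (cond x c) (CVar yvar) \/ lequiv (cond x c) (CNeg (CVar yvar)).

Definition classification n (c : circuit n) : Prop := forall x : instance n, classifies c x.

Definition F n (T : circuit n) (x : instance n) : circuit n :=
  if ~~ consistent (cond x T) then CTop
  else foldr (@CAnd n) CTop
         [seq l <- [:: CVar yvar; CNeg (CVar yvar)] | entails (cond x T) l].

Definition fact_compliant n (S T : circuit n) (x : instance n) : Prop :=
  entails (cond x S) (F T x).

Fixpoint forget n (W : seq (var n)) (c : circuit n) : circuit n :=
  match W with
  | [::] => c
  | v :: W' => forget W' (COr (cond1 v false c) (cond1 v true c))
  end.

(* W = PS \ (X ∪ {y}) ; here PS = X ∪ {y}, so W is empty *)
Definition Wrest (n : nat) : seq (var n) := [::].

Definition rectification_operator n (star : circuit n -> circuit n -> circuit n) : Prop :=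
  (forall S T, classification S -> classification (star S T)) /\
  (forall S T (x : instance n), classification S -> fact_compliant S T x ->
      lequiv (cond x (star S T)) (cond x S)) /\
  (forall S T (x : instance n), classification S ->
      entails (cond x (star S T)) (F T x)) /\
  (forall S T, classification S -> ~~ consistent T -> lequiv (star S T) S) /\
  (forall S S' T T', classification S -> classification S' ->
      lequiv S S' -> lequiv T T' -> lequiv (star S T) (star S' T')) /\
  (forall S T, classification S ->
      lequiv (star S T) (star (forget (Wrest n) S) (forget (Wrest n) T))).

(* Main.v *)
Require Import Defs.
From mathcomp Require Import all_boot.
Set Implicit Arguments. Unset Strict Implicit. Unset Printing Implicit Defensive.

Definition restr n (a : assignment n) : instance n := [ffun i => a (Some i)].
Definition upd n (a : assignment n) (x : instance n) : assignment n :=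
  [ffun v => if v is Some i then x i else a None].

Lemma eval_cond n (a : assignment n) x c : eval a (cond x c) = eval (upd a x) c.
Proof.
elim: c => [[i|]| | |c IH|c1 IH1 c2 IH2|c1 IH1 c2 IH2|[i|] c1 IH1 c2 IH2] /=;
  rewrite ?ffunE ?IH ?IH1 ?IH2 //.
- by match goal with |- context [match ?t with true => _ | false => _ end] => case: t end.
- by match goal with |- context [match ?t with true => _ | false => _ end] => case: t end; rewrite /= ?IH1 ?IH2 ?orbF.
Qed.

Lemma upd_restr n (a : assignment n) : upd a (restr a) = a.
Proof. by apply/ffunP => -[i|]; rewrite !ffunE. Qed.

Lemma restr_upd n (a : assignment n) x : restr (upd a x) = x.
Proof. by apply/ffunP => i; rewrite !ffunE. Qed.

Lemma eval_restr n (a : assignment n) c : eval a c = eval a (cond (restr a) c).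
Proof. by rewrite eval_cond upd_restr. Qed.

Definition mt n (x : instance n) : circuit n :=
  foldr (fun i c => CAnd (if x i then CVar (Some i) else CNeg (CVar (Some i))) c)
    CTop (enum 'I_n).

Lemma eval_mt n (a : assignment n) x : eval a (mt x) = (restr a == x).
Proof.
have -> : eval a (mt x) = all (fun i => a (Some i) == x i) (enum 'I_n).
  rewrite /mt; elim: (enum 'I_n) => [|i s IH] //=.
  by rewrite IH; case: (x i) => /=; [rewrite eqb_id|rewrite eqbF_neg].
apply/allP/eqP => [H|<- i _]; last by rewrite ffunE.
by apply/ffunP => i; rewrite ffunE; apply/eqP; apply: H; rewrite mem_enum.
Qed.

Definition cf n (f : instance n -> bool) : circuit n :=
  foldr (fun x c => COr (mt x) c) CBot [seq x <- enum {ffun 'I_n -> bool} | f x].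

Lemma eval_cf n (a : assignment n) f : eval a (cf f) = f (restr a).
Proof.
have E : forall s : seq (instance n),
  eval a (foldr (fun x c => COr (mt x) c) CBot [seq x <- s | f x]) =
  has (fun x => f x && (restr a == x)) s.
  elim=> [|x s IH] //=; case: (f x) => /=; rewrite ?IH ?eval_mt //.
rewrite /cf E; apply/hasP/idP => [[x _ /andP[fx /eqP E1]]|H]; first by subst x.
by exists (restr a); [rewrite mem_enum|rewrite H eqxx].
Qed.

Definition sbit n (S : circuit n) (x : instance n) : bool :=
  eval [ffun _ => true] (cond x S).
Definition bit n (S T : circuit n) x :=
  if entails (cond x S) (F T x) then sbit S x else ~~ sbit S x.
Definition star n (S T : circuit n) : circuit n :=
  CDec yvar (CNeg (cf (bit S T))) (cf (bit S T)).

Lemma eval_cond_star n (S T : circuit n) x a :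
  eval a (cond x (star S T)) = (a None == bit S T x).
Proof.
rewrite eval_cond /= !eval_cf restr_upd ffunE.
by case: (a None); case: (bit S T x).
Qed.

Lemma clsem n (S : circuit n) : classification S ->
  forall x a, eval a (cond x S) = (a None == sbit S x).
Proof.
move=> H x a; case: (H x) => E; rewrite /sbit !E /= ?ffunE.
  by rewrite eqb_id.
by case: (a None).
Qed.

Lemma entails_lit n (c d : circuit n) b g :
  (forall a, eval a c = (a None == b)) -> (forall a, eval a d = g (a None)) ->
  entails c d = g b.
Proof.
move=> Hc Hd; apply/forallP/idP => [H|gb a].
  by have := H [ffun _ => b]; rewrite Hc Hd ffunE eqxx.
by rewrite Hc Hd; apply/implyP => /eqP ->.
Qed.

Definition G (c p1 p2 b : bool) := ~~ (c && p1 && ~~ b) && ~~ (c && p2 && b).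

Lemma eval_F n (T : circuit n) x a :
  eval a (F T x) = G (consistent (cond x T)) (entails (cond x T) (CVar yvar))
     (entails (cond x T) (CNeg (CVar yvar))) (a None).
Proof.
rewrite /F /G; case: (consistent _) => //=.
case: (entails _ (CVar _)); case: (entails _ (CNeg _));
  by rewrite /= /yvar; case: (a None).
Qed.

Lemma notboth n (c : circuit n) :
  consistent c && entails c (CVar yvar) && entails c (CNeg (CVar yvar)) = false.
Proof.
apply/negP => /andP[/andP[/existsP[a Ha] /forallP H1] /forallP H2].
move: (H1 a) (H2 a); rewrite Ha /=.
by case: (a yvar).
Qed.

Lemma RE2 n (S T : circuit n) x : classification S -> fact_compliant S T x ->
  lequiv (cond x (star S T)) (cond x S).
Proof.
move=> HS Hc a; rewrite eval_cond_star (clsem HS) /bit.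
by rewrite /fact_compliant in Hc; rewrite Hc.
Qed.

Lemma entails_ext n (c c' d d' : circuit n) :
  (forall a, eval a c = eval a c') -> (forall a, eval a d = eval a d') ->
  entails c d = entails c' d'.
Proof. by move=> H1 H2; apply: eq_forallb => a; rewrite H1 H2. Qed.

Lemma consistent_ext n (c c' : circuit n) :
  (forall a, eval a c = eval a c') -> consistent c = consistent c'.
Proof. by move=> H1; apply: eq_existsb => a; rewrite H1. Qed.

Lemma compl_incons n (S T : circuit n) x : ~~ consistent T -> fact_compliant S T x.
Proof.
move=> Hinc.
have E : ~~ consistent (cond x T).
  apply: contra Hinc => /existsP [a' Ha'].
  by apply/existsP; exists (upd a' x); rewrite -eval_cond.
by rewrite /fact_compliant /F E /=; apply/forallP => a'; rewrite implybT.
Qed.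

Theorem proposition1 (n : nat) :
  (exists star : circuit n -> circuit n -> circuit n, rectification_operator star) /\
  (forall star star' : circuit n -> circuit n -> circuit n,
      rectification_operator star -> rectification_operator star' ->
      forall S T : circuit n, classification S -> lequiv (star S T) (star' S T)).
Proof.
split.
  exists (@star n); split; last split; last split; last split; last split.
  - move=> S T _ x; rewrite /classifies.
    case E: (bit S T x); [left|right] => a; rewrite eval_cond_star E /=.
      by rewrite eqb_id.
    by case: (a None).
  - by move=> S T x HS Hc; apply: RE2.
  - move=> S T x HS.
    rewrite (entails_lit (eval_cond_star S T x) (eval_F T x)) /bit.
    rewrite (entails_lit (clsem HS x) (eval_F T x)).
    have := notboth (cond x T).
    move: (consistent _) (entails _ (CVar yvar)) (entails _ (CNeg _)) (sbit S x).
    by rewrite /G => [[] [] [] []].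
  - move=> S T HS Hinc a.
    rewrite (eval_restr a (star S T)) (eval_restr a S); apply: RE2 => //.
    exact: compl_incons.
  - move=> S S' T T' _ _ HS HT a; rewrite /= !eval_cf.
    set x := restr a.
    have cS b : eval b (cond x S) = eval b (cond x S') by rewrite !eval_cond HS.
    have cT b : eval b (cond x T) = eval b (cond x T') by rewrite !eval_cond HT.
    have EF : F T x = F T' x.
      have e1 := consistent_ext cT.
      have e2 := entails_ext (d := CVar yvar) (d' := CVar yvar) cT (fun _ => erefl).
      have e3 := entails_ext (d := CNeg (CVar yvar)) (d' := CNeg (CVar yvar)) cT (fun _ => erefl).
      by rewrite /F e1; case: (~~ _) => /=; rewrite ?e2 ?e3.
    rewrite /bit /sbit EF (entails_ext cS (fun _ => erefl)) cS //.
  - by move=> S T _ a.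
move=> s1 s2 [R11 [R12 [R13 _]]] [R21 [R22 [R23 _]]] S T HS a.
rewrite (eval_restr a (s1 S T)) (eval_restr a (s2 S T)).
set x := restr a.
rewrite (clsem (R11 S T HS)) (clsem (R21 S T HS)); congr (_ == _).
case Hc: (entails (cond x S) (F T x)).
  by rewrite /sbit (R12 S T x HS Hc) (R22 S T x HS Hc).
have := R13 S T x HS; have := R23 S T x HS.
rewrite (entails_lit (clsem (R11 S T HS) x) (eval_F T x)).
rewrite (entails_lit (clsem (R21 S T HS) x) (eval_F T x)).
move: Hc; rewrite (entails_lit (clsem HS x) (eval_F T x)).
move: (consistent _) (entails _ (CVar yvar)) (entails _ (CNeg _)).
move: (sbit S x) (sbit (s1 S T) x) (sbit (s2 S T) x).
by rewrite /G => [[] [] [] [] [] []].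
Qed.
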